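(* Let $D \in \mathbb{R}^{m \times n}$, let $Q \in \mathbb{Z}^{m\times n}$ be such that for each $j$ the $j$th column of $Q$ stores the sorting of the $j$th column of $D$, let $(a_1,\ldots,a_p)$ be a sequence of column indices of $D$, let $L$ be the ranking vector of the lexicographical sorting of the sub-matrix of $D$ determined by the sequence of columns $(a_1,\ldots,a_p)$, and let $i \in \{0,\ldots,n-1\}$. Then QuickLexSortRefine$(D,Q,i,L)$ returns the ranking vector $L'$ of the lexicographical sorting of the sub-matrix of $D$ determined by the sequence of columns $(a_1,\ldots,a_p,i)$.
   Context: Rows of $D$ are indexed by $\{0,\ldots,m-1\}$, columns by $\{0,\ldots,n-1\}$. ''The $j$th column of $Q$ stores the sorting of the $j$th column of $D$'' means $(Q_{0j},\ldots,Q_{m-1,j})$ is a permutation of $\{0,\ldots,m-1\}$ with $D_{Q_{0j},j} \le D_{Q_{1j},j} \le \cdots \le D_{Q_{m-1,j},j}$. For a sequence of columns $(b_1,\ldots,b_q)$, the sub-matrix determined by it has row $r$ equal to $(D_{r b_1},\ldots,D_{r b_q})$, and its rows are compared in lexicographic order: $v <_{\mathrm{lex}} w$ iff $v_1<w_1$, or $v_1=w_1,\ldots,v_k=w_k$ and $v_{k+1}<w_{k+1}$ for some $k$. The ranking vector of this ordering is the unique $L \in \{0,\ldots,m-1\}^m$ such that equal rows $r,s$ have $L_r = L_s$, rows with row $r$ lexicographically smaller than row $s$ have $L_r < L_s$, and $\sum_r L_r$ is minimal (equivalently, $L_r$ is the number of distinct rows of the sub-matrix that are lexicographically smaller than row $r$).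 For the empty sequence the ranking vector is the zero vector. QuickLexSortRefine$(D,Q,i,L)$ is the following procedure. Initialize integer arrays $\mathrm{IDval},\mathrm{IDvalInit},\mathrm{subID},\mathrm{newCount},\mathrm{numNewID}$ of length $m$ to zero. For $j=0,\ldots,m-1$: let $r := Q[j,i]$ and $\ell := L[r]$; if $\mathrm{IDvalInit}[\ell]=0$, set $\mathrm{IDvalInit}[\ell]:=1$ and $\mathrm{IDval}[\ell]:=D[r,i]$; otherwise, if $\mathrm{IDval}[\ell]\neq D[r,i]$, set $\mathrm{IDval}[\ell]:=D[r,i]$ and $\mathrm{newCount}[\ell]:=\mathrm{newCount}[\ell]+1$; in all cases then set $\mathrm{subID}[r]:=\mathrm{newCount}[\ell]$. Next set $\mathrm{numNewID}[m-1]:=\sum_{j=0}^{m-2}\mathrm{newCount}[j]$ and, for $j=m-2,m-3,\ldots,1$, $\mathrm{numNewID}[j]:=\mathrm{numNewID}[j+1]-\mathrm{newCount}[j]$ ($\mathrm{numNewID}[0]$ stays $0$). Finally, for $j=0,\ldots,m-1$ set $L'[j]:=L[j]+\mathrm{numNewID}[L[j]]+\mathrm{subID}[j]$, and return $L'$. *)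

(* Defs.v *)
From HB Require Import structures.
From mathcomp Require Import all_boot all_order all_algebra.
From mathcomp Require Import reals.
Set Implicit Arguments. Unset Strict Implicit. Unset Printing Implicit Defensive.
Import Order.TTheory GRing.Theory Num.Theory.
Local Open Scope ring_scope.

Section Defs.
Variable R : realType.
Variables m n : nat.

(* entry D[r, c] for an integer row index r (0 if r is out of range;
   never used out of range under the hypotheses of the theorem) *)
Definition Dat (D : 'M[R]_(m, n)) (r : int) (c : 'I_n) : R :=
  match insub (absz r) with Some r' => D r' c | None => 0 end.

Definition sorting_matrix (D : 'M[R]_(m, n)) (Q : 'M[int]_(m, n)) : Prop :=
  forall c : 'I_n,
    [/\ forall k : 'I_m, (0 <= Q k c) && (Q k c < m%:Z),
        forall k1 k2 : 'I_m, Q k1 c = Q k2 c -> k1 = k2 &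
        forall k1 k2 : 'I_m, (k1 <= k2)%N -> Dat D (Q k1 c) c <= Dat D (Q k2 c) c].

Definition subrow (D : 'M[R]_(m, n)) (s : seq 'I_n) (r : 'I_m) : seq R :=
  [seq D r b | b <- s].

Fixpoint lexlt (v w : seq R) : bool :=
  match v, w with
  | x :: v', y :: w' => (x < y) || ((x == y) && lexlt v' w')
  | _, _ => false
  end.

Definition rank_admissible (D : 'M[R]_(m, n)) (s : seq 'I_n) (L : 'I_m -> int) : Prop :=
  [/\ forall r, (0 <= L r) && (L r < m%:Z),
      forall r s', subrow D s r = subrow D s s' -> L r = L s' &
      forall r s', lexlt (subrow D s r) (subrow D s s') -> L r < L s'].

Definition is_ranking_vector (D : 'M[R]_(m, n)) (s : seq 'I_n) (L : 'I_m -> int) : Prop :=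
  rank_admissible D s L /\
  forall L' : 'I_m -> int, rank_admissible D s L' ->
    \sum_(r < m) L r <= \sum_(r < m) L' r.

Definition upd {T : Type} (f : nat -> T) (k : nat) (v : T) : nat -> T :=
  fun x => if x == k then v else f x.

Definition Lat (L : 'I_m -> int) (r : nat) : int :=
  match insub r with Some r' => L r' | None => 0 end.

Record qstate := QState {
  IDval : nat -> R; IDvalInit : nat -> int; subID : nat -> int; newCount : nat -> int }.

Definition qstep (D : 'M[R]_(m, n)) (Q : 'M[int]_(m, n)) (i : 'I_n) (L : 'I_m -> int)
    (st : qstate) (j : 'I_m) : qstate :=
  let r := Q j i in
  let l := absz (Lat L (absz r)) in
  let d := Dat D r i in
  let st1 :=
    if IDvalInit st l == 0 then
      QState (upd (IDval st) l d) (upd (IDvalInit st) l 1) (subID st) (newCount st)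
    else if IDval st l != d then
      QState (upd (IDval st) l d) (IDvalInit st) (subID st)
             (upd (newCount st) l (newCount st l + 1))
    else st in
  QState (IDval st1) (IDvalInit st1) (upd (subID st1) (absz r) (newCount st1 l))
         (newCount st1).

Definition QuickLexSortRefine (D : 'M[R]_(m, n)) (Q : 'M[int]_(m, n)) (i : 'I_n)
    (L : 'I_m -> int) : 'I_m -> int :=
  let st := foldl (qstep D Q i L) (QState (fun _ => 0) (fun _ => 0) (fun _ => 0) (fun _ => 0))
                  (enum 'I_m) in
  let nc := newCount st in
  (* numNewID[m-1] := sum_{j=0}^{m-2} newCount[j] *)
  let nn0 : nat -> int := upd (fun _ => 0) m.-1 (\sum_(0 <= j < m.-1) nc j) in
  (* for j = m-2, m-3, ..., 1 : numNewID[j] := numNewID[j+1] - newCount[j] *)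
  let nn := foldl (fun f j => upd f j (f j.+1 - nc j)) nn0
                  [seq (m.-2 - k)%N | k <- iota 0 m.-2] in
  fun j => L j + nn (absz (L j)) + subID st j.
End Defs.

(* Main.v *)
Require Import Defs.
From HB Require Import structures.
From mathcomp Require Import all_boot all_order all_algebra.
From mathcomp Require Import reals zify.
Import Order.TTheory GRing.Theory Num.Theory.
Local Open Scope ring_scope.
Set Implicit Arguments. Unset Strict Implicit.

Lemma iotaSr0 (t : nat) : iota 0 t.+1 = rcons (iota 0 t) t.
Proof. by rewrite -addn1 iotaD add0n cats1. Qed.

Section PartA.
Variable R : realType.

Lemma lexlt_total (v w : seq R) : size v = size w ->
  [\/ v = w, lexlt v w | lexlt w v].
Proof.
elim: v w => [|x v IH] [|y w] //=; first by move=> _; apply: Or31.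
move=> [] /IH [->|h|h]; case: (ltgtP x y) => h'.
all: try by [apply: Or32 | apply: Or33].
- by apply: Or31; rewrite h'.
Qed.

Lemma lexlt_rcons (v w : seq R) x y : size v = size w ->
  lexlt (rcons v x) (rcons w y) = lexlt v w || ((v == w) && (x < y)).
Proof.
elim: v w => [|a v IH] [|b w] //=.
- by rewrite andbF orbF.
- move=> [] /IH ->. rewrite eqseq_cons.
  case: (ltgtP a b) => //= h.
Qed.

Variables m n : nat.
Implicit Types (D : 'M[R]_(m, n)) (s : seq 'I_n).

Lemma size_subrow D s r : size (subrow D s r) = size s.
Proof. by rewrite size_map. Qed.

Lemma subrow_rcons D s i r : subrow D (rcons s i) r = rcons (subrow D s r) (D r i).
Proof. by rewrite /subrow map_rcons. Qed.

Definition dense (L : 'I_m -> int) := forall r, 0 < L r -> exists r', L r' = L r - 1.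

Lemma adm_dense_le D s L L' : rank_admissible D s L -> dense L ->
  rank_admissible D s L' -> forall r, L r <= L' r.
Proof.
move=> [HLr HLe HLl] Hd [HL'r HL'e HL'l].
suff H : forall k : nat, forall r, L r = k%:Z -> k%:Z <= L' r.
  move=> r; have := HLr r; case/andP=> h0 _.
  have -> : L r = (absz (L r))%:Z by rewrite gez0_abs.
  by apply: H; rewrite gez0_abs.
elim=> [|k IH] r Hr.
  by case/andP: (HL'r r).
have [r' Hr'] : exists r', L r' = L r - 1 by apply: Hd; rewrite Hr.
have Hk : L r' = k%:Z by rewrite Hr' Hr; lia.
have := IH _ Hk.
case: (lexlt_total (etrans (size_subrow D s r') (esym (size_subrow D s r)))).
- by move=> /HLe; rewrite Hk Hr; lia.
- move=> /HL'l; lia.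
- by move=> /HLl; rewrite Hk Hr; lia.
Qed.

Lemma dense_ranking D s L : rank_admissible D s L -> dense L -> is_ranking_vector D s L.
Proof.
move=> HA Hd; split=> // L' HA'.
apply: ler_sum => r _; exact: (adm_dense_le HA Hd HA').
Qed.

Lemma ranking_dense D s L : is_ranking_vector D s L -> dense L.
Proof.
move=> [[HLr HLe HLl] Hmin] r Hr.
case: (boolP [exists r', L r' == L r - 1]) => [/existsP [r' /eqP h]|hne].
  by exists r'.
exfalso.
have Hne : forall x, L x != L r - 1.
  by move=> x; apply/negP => hx; move/negP: hne; apply; apply/existsP; exists x.
pose L'' := fun x => if L r <= L x then L x - 1 else L x.
have HA : rank_admissible D s L''.
  split.
  - move=> x; rewrite /L''; have := HLr x; case: ifP => h; lia.
  - by move=> x y /HLe; rewrite /L'' => ->.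
  - move=> x y /HLl h; rewrite /L''.
    have := Hne x; have := HLr x; have := HLr y.
    case: ifP; case: ifP => h1 h2; move/eqP; lia.
have := Hmin _ HA.
rewrite (bigD1 r) //= [X in _ <= X](bigD1 r) //=.
have h1 : \sum_(i < m | i != r) L'' i <= \sum_(i < m | i != r) L i.
  by apply: ler_sum => x _; rewrite /L''; case: ifP => _; lia.
have : L'' r < L r by rewrite /L'' lexx; lia.
move: h1; move: (\sum_(i < m | i != r) L'' i) (\sum_(i < m | i != r) L i) (L'' r) (L r) => a b c d; lia.
Qed.

Lemma dense_bound (L' : 'I_m -> int) : (forall r, 0 <= L' r) -> dense L' -> forall r, L' r < m%:Z.
Proof.
move=> h0 hd r.
have Hall : forall d : nat, forall r0, L' r0 = d%:Z -> forall v, (v <= d)%N -> exists r', L' r' = v%:Z.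
  elim=> [|d IH] r0 e v hv.
    by exists r0; rewrite e; have -> : v = 0%N by lia.
  case: (eqVneq v d.+1) => [->|ne]; first by exists r0.
  have [r1 e1] : exists r1, L' r1 = L' r0 - 1 by apply: hd; rewrite e.
  apply: (IH r1); [rewrite e1 e; lia | lia].
have eK : L' r = (absz (L' r))%:Z by rewrite gez0_abs.
pose K := absz (L' r).
pose g := fun v : 'I_K.+1 => odflt r [pick x | L' x == (val v)%:Z].
have gP : forall v : 'I_K.+1, L' (g v) = (val v)%:Z.
  move=> v; rewrite /g; case: pickP => [x /eqP //|hn] /=.
  have [r' e'] := Hall K r eK v (ltn_ord v).
  by move: (hn r'); rewrite e' eqxx.
have ginj : injective g.
  move=> v1 v2 e; apply/val_inj; have := gP v1; rewrite e gP.
  by move=> [].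
have := leq_card g ginj; rewrite !card_ord => h.
rewrite eK ltz_nat; exact: h.
Qed.
End PartA.

Lemma nn_correct (M : nat) (nc : nat -> int) (l : nat) : (l < M)%N ->
  foldl (fun f j => upd f j (f j.+1 - nc j))
        (upd (fun _ => 0) M.-1 (\sum_(0 <= j < M.-1) nc j))
        [seq (M.-2 - k)%N | k <- iota 0 M.-2] l = \sum_(0 <= k < l) nc k.
Proof.
move=> hl.
set f0 := upd _ _ _.
suff H : forall t, (t <= M.-2)%N -> forall x, (x <= M.-1)%N -> (M.-1 - t <= x)%N || (x == 0%N) ->
  foldl (fun f j => upd f j (f j.+1 - nc j)) f0 [seq (M.-2 - k)%N | k <- iota 0 t] x
  = \sum_(0 <= k < x) nc k.
  apply: H => //; first by lia.
  by apply/orP; case: l hl => [|l] hl; [right|left]; lia.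
elim=> [|t IH] ht x hx hx2.
  rewrite /= /f0 /upd; case: eqP => [->|ne] //.
  have -> : x = 0%N by move: hx2 hx ne; case: eqP => [//|_] /=; rewrite subn0 => a b; lia.
  by rewrite big_geq.
rewrite iotaSr0 map_rcons foldl_rcons {1}/upd.
case: eqP => [->|ne].
  rewrite IH; [|lia|lia|apply/orP; left; lia].
  have h : (M.-2 - t = (M.-2 - t))%N by [].
  rewrite (big_nat_recr (M.-2 - t)%N 0) //=.
  by rewrite addrK.
apply: IH; [lia|lia|].
move: hx2 => /orP[h|->]; last by rewrite orbT.
apply/orP; left; lia.
Qed.

Section PartB.
Variables (R : realType) (m n : nat) (D : 'M[R]_(m, n)) (Q : 'M[int]_(m, n)).
Variables (i : 'I_n) (L : 'I_m -> int).
Hypothesis HQ : sorting_matrix D Q.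
Hypothesis HLr : forall r, 0 <= L r < m.

Definition qn (t : nat) : int :=
  match (insub t : option 'I_m) with Some t' => Q t' i | None => 0 end.
Definition cls (t : nat) : nat := absz (Lat L (absz (qn t))).
Definition vl (t : nat) : R := Dat D (qn t) i.
Definition newp (t : nat) : bool :=
  has (fun k => cls k == cls t) (iota 0 t) &&
  all (fun k => (cls k == cls t) ==> (vl k < vl t)) (iota 0 t).
Definition cnt (l u : nat) : nat := count (fun k => (cls k == l) && newp k) (iota 0 u).

Lemma qn_ord (j : 'I_m) : qn j = Q j i.
Proof. by rewrite /qn valK. Qed.

Definition Inv (t : nat) (st : qstate R) : Prop :=
 [/\ forall l, IDvalInit st l = (if has (fun k => cls k == l) (iota 0 t) then 1 else 0),
     forall l, has (fun k => cls k == l) (iota 0 t) ->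
        (exists2 k, (k < t)%N & (cls k = l /\ IDval st l = vl k)) /\
        (forall k, (k < t)%N -> cls k = l -> vl k <= IDval st l),
     forall l, newCount st l = (cnt l t)%:Z &
     forall k, (k < t)%N -> subID st (absz (qn k)) = (cnt (cls k) k.+1)%:Z].

Lemma has_S (P : pred nat) t : has P (iota 0 t.+1) = has P (iota 0 t) || P t.
Proof. by rewrite iotaSr0 has_rcons orbC. Qed.

Lemma cnt_S l t : cnt l t.+1 = (cnt l t + ((cls t == l) && newp t))%N.
Proof. by rewrite /cnt iotaSr0 -cats1 count_cat /= addn0. Qed.

Lemma vl_sorted k (t : 'I_m) : (k <= t)%N -> vl k <= vl t.
Proof.
move=> h; have hk : (k < m)%N by apply: leq_ltn_trans h _.
have [_ _ H] := HQ i.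
rewrite /vl (qn_ord t).
have -> : qn k = Q (Ordinal hk) i by rewrite -qn_ord.
exact: H.
Qed.

Lemma qn_ge0 (k : nat) : 0 <= qn k.
Proof.
rewrite /qn; case: insubP => [k' _ _|_] //.
by have [H _ _] := HQ i; case/andP: (H k').
Qed.

Lemma qn_inj k (t : 'I_m) : (k < t)%N -> absz (qn k) != absz (qn t).
Proof.
move=> h; have hk : (k < m)%N by apply: ltn_trans h _.
have [_ Hinj _] := HQ i.
apply/eqP => e.
have e2 : qn k = qn t.
  by rewrite -(gez0_abs (qn_ge0 k)) -(gez0_abs (qn_ge0 t)) e.
have : Ordinal hk = t.
  by apply: Hinj; rewrite -!qn_ord.
move=> e3; move: h; rewrite -e3 /=; by rewrite ltnn.
Qed.

Lemma step_Inv (j : 'I_m) st : Inv j st -> Inv j.+1 (qstep D Q i L st j).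
Proof.
move=> [Ha Hb Hc Hd].
have Hbo : forall l (f : nat -> R), l != cls j -> f l = IDval st l ->
    has (fun k => cls k == l) (iota 0 j.+1) ->
    (exists2 k, (k < j.+1)%N & (cls k = l /\ f l = vl k)) /\
    (forall k, (k < j.+1)%N -> cls k = l -> vl k <= f l).
  move=> l f ne -> H.
  have H' : has (fun k => cls k == l) (iota 0 j).
    by move: H; rewrite has_S eq_sym (negbTE ne) orbF.
  have [[k hk hh] hb] := Hb l H'; split; first by exists k => //; apply: ltnW.
  move=> k'; rewrite ltnS leq_eqVlt => /orP[/eqP->|hk'] hc.
    by move: ne; rewrite -hc eqxx.
  exact: hb.
have Hno : forall k, (k < j)%N -> subID st (absz (qn k)) = (cnt (cls k) k.+1)%:Z := Hd.
rewrite /qstep -qn_ord -/(cls j) -/(vl j).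
case: ifP => [h0|h0]; last case: ifP => [h1|h1].
- have hasF : has (fun k => cls k == cls j) (iota 0 j) = false.
    by move: h0; rewrite Ha; case: has.
  have npF : newp j = false by rewrite /newp hasF.
  split; cbn [IDval IDvalInit subID newCount].
  + move=> l; rewrite /upd has_S; case: (eqVneq l (cls j)) => [->|ne].
      by rewrite orbT.
    by rewrite Ha orbF.
  + move=> l; case: (eqVneq l (cls j)) => [->|ne] H; last first.
      by apply: Hbo => //; rewrite /upd (negbTE ne).
    rewrite /upd eqxx; split; first by exists j.
    move=> k; rewrite ltnS leq_eqVlt => /orP[/eqP->|hk] hc //.
    have := hasPn (negbT hasF) k; rewrite mem_iota /= hk hc eqxx => /(_ isT).
    by [].
  + by move=> l; rewrite Hc cnt_S npF andbF addn0.
  + move=> k; rewrite ltnS leq_eqVlt => /orP[/eqP->|hk]; rewrite /upd.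
      by rewrite eqxx Hc cnt_S npF andbF addn0.
    by rewrite (negbTE (qn_inj hk)) Hd.
- have hasT : has (fun k => cls k == cls j) (iota 0 j).
    by move: h0; rewrite Ha; case: has.
  have [[k0 hk0 [hc0 hv0]] hbnd] := Hb _ hasT.
  have hle : IDval st (cls j) <= vl j by rewrite hv0; apply: vl_sorted; apply: ltnW.
  have hlt : IDval st (cls j) < vl j by rewrite lt_neqAle h1 hle.
  have npT : newp j.
    rewrite /newp hasT /=; apply/allP => k; rewrite mem_iota => /andP[_ hk].
    by apply/implyP => /eqP hc; apply: le_lt_trans (hbnd k hk hc) hlt.
  split; cbn [IDval IDvalInit subID newCount].
  + move=> l; rewrite Ha has_S; case: (eqVneq l (cls j)) => [->|ne].
      by rewrite hasT.
    by rewrite orbF.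
  + move=> l; case: (eqVneq l (cls j)) => [->|ne] H; last first.
      by apply: Hbo => //; rewrite /upd (negbTE ne).
    rewrite /upd eqxx; split; first by exists j.
    move=> k; rewrite ltnS leq_eqVlt => /orP[/eqP->|hk] hc //.
    exact: le_trans (hbnd k hk hc) hle.
  + move=> l; rewrite /upd cnt_S; case: (eqVneq l (cls j)) => [->|ne].
      by rewrite ?eqxx npT Hc PoszD.
    by rewrite Hc ?andFb ?addn0.
  + move=> k; rewrite ltnS leq_eqVlt => /orP[/eqP->|hk]; rewrite /upd.
      by rewrite !eqxx Hc cnt_S npT eqxx PoszD.
    by rewrite (negbTE (qn_inj hk)) Hd.
- have hasT : has (fun k => cls k == cls j) (iota 0 j).
    by move: h0; rewrite Ha; case: has.
  have [[k0 hk0 [hc0 hv0]] hbnd] := Hb _ hasT.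
  move/negbFE/eqP: h1 => h1.
  have npF : newp j = false.
    rewrite /newp hasT /=; apply/negbTE/allPn; exists k0; first by rewrite mem_iota.
    by rewrite hc0 eqxx /= -hv0 h1 ltxx.
  split; cbn [IDval IDvalInit subID newCount].
  + move=> l; rewrite Ha has_S; case: (eqVneq l (cls j)) => [->|ne].
      by rewrite hasT.
    by rewrite orbF.
  + move=> l; case: (eqVneq l (cls j)) => [->|ne] H; last by apply: Hbo.
    split; first by exists k0 => //; apply: ltnW.
    move=> k; rewrite ltnS leq_eqVlt => /orP[/eqP->|hk] hc.
      by rewrite h1.
    exact: hbnd.
  + by move=> l; rewrite Hc cnt_S npF andbF addn0.
  + move=> k; rewrite ltnS leq_eqVlt => /orP[/eqP->|hk]; rewrite /upd.
      by rewrite eqxx Hc cnt_S npF andbF addn0.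
    by rewrite (negbTE (qn_inj hk)) Hd.
Qed.

Definition st0 : qstate R := QState (fun _ => 0) (fun _ => 0) (fun _ => 0) (fun _ => 0).

Definition stepn (st : qstate R) (t : nat) : qstate R :=
  match (insub t : option 'I_m) with Some j => qstep D Q i L st j | None => st end.

Lemma fold_enum st : foldl (qstep D Q i L) st (enum 'I_m) = foldl stepn st (iota 0 m).
Proof.
rewrite -val_enum_ord; elim: (enum 'I_m) st => [|x s IH] st //=.
by rewrite IH /stepn valK.
Qed.

Lemma Inv_fold t : (t <= m)%N -> Inv t (foldl stepn st0 (iota 0 t)).
Proof.
elim: t => [|t IH] ht.
  split => //= l; by case.
rewrite iotaSr0 foldl_rcons /stepn; case: insubP => [j _ hj|hn]; last by rewrite ht in hn.
move: (IH (ltnW ht)); rewrite -hj; exact: step_Inv.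
Qed.

Definition stf := foldl (qstep D Q i L) st0 (enum 'I_m).
Lemma Inv_stf : Inv m stf.
Proof. by rewrite /stf fold_enum; apply: Inv_fold. Qed.

Lemma Qrange (k : 'I_m) : (absz (Q k i) < m)%N.
Proof.
have [H _ _] := HQ i; case/andP: (H k) => h0 h1.
by move: h1; rewrite -(gez0_abs h0) ltz_nat.
Qed.

Definition f (k : 'I_m) : 'I_m := insubd k (absz (Q k i)).
Lemma f_val k : val (f k) = absz (Q k i).
Proof. by rewrite val_insubd Qrange. Qed.

Lemma f_inj : injective f.
Proof.
move=> k1 k2 e.
have [H Hinj _] := HQ i; apply: Hinj.
case/andP: (H k1) => a _; case/andP: (H k2) => b _.
by rewrite -(gez0_abs a) -(gez0_abs b) -!f_val e.
Qed.

Definition pos (r : 'I_m) : nat := invF f_inj r.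
Lemma pos_lt r : (pos r < m)%N.
Proof. exact: ltn_ord. Qed.
Lemma qn_pos r : absz (qn (pos r)) = r.
Proof. by rewrite /pos qn_ord -f_val f_invF. Qed.
Lemma pos_f (k : 'I_m) : pos (f k) = k.
Proof. by rewrite /pos invF_f. Qed.

Lemma L_ge0 r : 0 <= L r. Proof. by case/andP: (HLr r). Qed.

Lemma cls_pos r : cls (pos r) = absz (L r).
Proof. by rewrite /cls qn_pos /Lat valK. Qed.

Lemma vl_pos r : vl (pos r) = D r i.
Proof.
rewrite /vl -(gez0_abs (qn_ge0 (pos r))) qn_pos /Dat.
by rewrite absz_nat valK.
Qed.

Lemma vl_sortedn k t : (k <= t)%N -> (t < m)%N -> vl k <= vl t.
Proof. move=> h ht; exact: (@vl_sorted k (Ordinal ht)). Qed.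

Lemma cnt_mono l u u' : (u <= u')%N -> (cnt l u <= cnt l u')%N.
Proof.
move=> h; rewrite /cnt -(subnKC h) iotaD count_cat; exact: leq_addr.
Qed.

Lemma cnt_const l u d : (forall t, (u <= t < u + d)%N -> ~~ ((cls t == l) && newp t)) ->
  cnt l (u + d) = cnt l u.
Proof.
elim: d => [|d IH] H; first by rewrite addn0.
rewrite addnS cnt_S IH; last by move=> t ht; apply: H; lia.
have := H (u + d)%N; rewrite leq_addr /= addnS ltnSn => /(_ isT) /negbTE ->.
by rewrite addn0.
Qed.

Lemma cnt_last l u : has (fun k => cls k == l) (iota 0 u) ->
  exists k, [/\ (k < u)%N, cls k = l & cnt l k.+1 = cnt l u].
Proof.
elim: u => [|u IH] //.
rewrite has_S; case: (eqVneq (cls u) l) => [e _|ne]; first by exists u.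
rewrite orbF => /IH [k [hk hc he]]; exists k; split => //; first exact: ltnW.
by rewrite he [cnt l u.+1]cnt_S (negbTE ne) addn0.
Qed.

Lemma cnt_prev l u : (0 < cnt l u)%N ->
  exists k, [/\ (k < u)%N, cls k = l & cnt l k.+1 = (cnt l u).-1].
Proof.
elim: u => [|u IH] //.
rewrite cnt_S; case: (boolP ((cls u == l) && newp u)) => [/andP [/eqP e np]|nn] /=.
  have hs : has (fun k => cls k == l) (iota 0 u).
    by move: np; rewrite /newp e => /andP [].
  have [k [hk hc he]] := cnt_last hs.
  by exists k; split => //; [apply: ltnW | rewrite he addn1].
rewrite addn0 => /IH [k [hk hc he]]; exists k; split => //; exact: ltnW.
Qed.

Lemma cnt_eq k k' : (k <= k')%N -> (k' < m)%N -> cls k = cls k' -> vl k = vl k' ->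
  cnt (cls k) k'.+1 = cnt (cls k) k.+1.
Proof.
move=> h hm hc hv.
have -> : k'.+1 = (k.+1 + (k' - k))%N by lia.
apply: cnt_const => t ht; apply/negP => /andP [/eqP ct np].
move: np; rewrite /newp => /andP [_ /allP /(_ k)].
rewrite mem_iota /= ct eqxx /=.
have hkt : (k < t)%N by lia.
move=> /(_ hkt).
have h1 := vl_sortedn (ltnW hkt) (leq_ltn_trans (ltnW (leq_trans _ _)) hm).
have e : vl t = vl k.
  apply/eqP; rewrite eq_le; apply/andP; split.
    by rewrite hv; apply: vl_sortedn => //; lia.
  by apply: vl_sortedn; lia.
by rewrite e ltxx.
Qed.

Lemma cnt_lt k k' : (k < m)%N -> (k' < m)%N -> cls k = cls k' -> vl k < vl k' ->
  (cnt (cls k) k.+1 < cnt (cls k) k'.+1)%N.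
Proof.
move=> hk hk' hc hv.
have hkk : (k < k')%N.
  rewrite ltnNge; apply/negP => h.
  by have := vl_sortedn h hk; rewrite leNgt hv.
pose P := fun t => (cls t == cls k) && (vl t == vl k').
have exP : exists t, P t by exists k'; rewrite /P hc !eqxx.
case: (ex_minnP exP) => t0 /andP [/eqP c0 /eqP v0] hmin.
have t0k' : (t0 <= k')%N by apply: hmin; rewrite /P hc !eqxx.
have kt0 : (k < t0)%N.
  rewrite ltnNge; apply/negP => h.
  by have := vl_sortedn h hk; rewrite v0 leNgt hv.
have np : newp t0.
  rewrite /newp; apply/andP; split.
    by apply/hasP; exists k; [rewrite mem_iota | rewrite c0].
  apply/allP => k2; rewrite mem_iota /= => hk2; apply/implyP => /eqP c2.
  rewrite lt_neqAle vl_sortedn; last by lia.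
  - rewrite andbT v0; apply/eqP => e.
    have : (t0 <= k2)%N by apply: hmin; rewrite /P c2 c0 e !eqxx.
    by rewrite leqNgt hk2.
  - exact: ltnW.
apply: (@leq_ltn_trans (cnt (cls k) t0)); first exact: cnt_mono.
apply: (@leq_trans (cnt (cls k) t0.+1)); last exact: cnt_mono.
by rewrite cnt_S c0 eqxx np addn1.
Qed.


Definition c (r : 'I_m) : nat := cnt (absz (L r)) (pos r).+1.
Definition S (l : nat) : int := \sum_(0 <= k < l) (cnt k m)%:Z.

Lemma QLSR_eq j : QuickLexSortRefine D Q i L j = L j + S (absz (L j)) + (c j)%:Z.
Proof.
have [_ _ Hc Hd] := Inv_stf.
rewrite /QuickLexSortRefine -/st0 -/stf.
have hl : (absz (L j) < m)%N.
  by case/andP: (HLr j) => a b; move: b; rewrite -(gez0_abs a) ltz_nat.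
rewrite nn_correct // -(qn_pos j) Hd ?pos_lt // cls_pos /S /c.
by congr (_ + _ + _); apply: eq_bigr => k _; rewrite Hc.
Qed.


Lemma absL_inj r r' : absz (L r) = absz (L r') -> L r = L r'.
Proof. by move=> e; rewrite -[L r](gez0_abs (L_ge0 r)) -[L r'](gez0_abs (L_ge0 r')) e. Qed.

Lemma c_eq r r' : L r = L r' -> D r i = D r' i -> c r = c r'.
Proof.
wlog h : r r' / (pos r <= pos r')%N.
  move=> H e1 e2; case: (leqP (pos r) (pos r')) => h; first exact: H.
  by apply/esym; apply: H => //; apply: ltnW.
move=> e1 e2.
have hc : cls (pos r) = cls (pos r') by rewrite !cls_pos e1.
have hv : vl (pos r) = vl (pos r') by rewrite !vl_pos e2.
have := cnt_eq h (pos_lt r') hc hv.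
by rewrite /c cls_pos -e1 => ->.
Qed.

Lemma c_lt r r' : L r = L r' -> D r i < D r' i -> (c r < c r')%N.
Proof.
move=> e1 e2.
have hc : cls (pos r) = cls (pos r') by rewrite !cls_pos e1.
have hv : vl (pos r) < vl (pos r') by rewrite !vl_pos.
have := cnt_lt (pos_lt r) (pos_lt r') hc hv.
by rewrite /c cls_pos -e1.
Qed.

Lemma c_le r : (c r <= cnt (absz (L r)) m)%N.
Proof. exact: cnt_mono (pos_lt r). Qed.

Lemma c_prev r : (0 < c r)%N -> exists r', L r' = L r /\ c r' = (c r).-1.
Proof.
move=> /cnt_prev [k [hk hc he]].
have hkm : (k < m)%N by apply: leq_trans hk (pos_lt r).
exists (f (Ordinal hkm)).
have hL : L (f (Ordinal hkm)) = L r.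
  by apply: absL_inj; rewrite -cls_pos pos_f.
split => //; rewrite /c hL pos_f /=; exact: he.
Qed.

Lemma c_last r : exists r', L r' = L r /\ c r' = cnt (absz (L r)) m.
Proof.
have hs : has (fun k => cls k == absz (L r)) (iota 0 m).
  by apply/hasP; exists (pos r); [rewrite mem_iota pos_lt | rewrite cls_pos].
have [k [hkm hc he]] := cnt_last hs.
exists (f (Ordinal hkm)).
have hL : L (f (Ordinal hkm)) = L r.
  by apply: absL_inj; rewrite -cls_pos pos_f.
split => //; rewrite /c hL pos_f /=; exact: he.
Qed.

Lemma S_S l : S l.+1 = S l + (cnt l m)%:Z.
Proof. by rewrite /S big_nat_recr. Qed.

Lemma S_mono l l' : (l <= l')%N -> S l <= S l'.
Proof.
move=> h; rewrite /S (big_cat_nat (leq0n l) h) //= lerDl.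
by apply: sumr_ge0.
Qed.

Lemma S_ge0 l : 0 <= S l.
Proof. by apply: sumr_ge0. Qed.

Lemma main_section (a : seq 'I_n) : rank_admissible D a L -> dense L ->
  is_ranking_vector D (rcons a i) (QuickLexSortRefine D Q i L).
Proof.
move=> [_ HLe HLl] Hdn.
have HLZ : forall r, L r = (absz (L r))%:Z by move=> r; rewrite gez0_abs ?L_ge0.
have ge0 : forall r, 0 <= QuickLexSortRefine D Q i L r.
  move=> r; rewrite QLSR_eq; have := S_ge0 (absz (L r)); have := L_ge0 r; lia.
have Hd : dense (QuickLexSortRefine D Q i L).
  move=> r; rewrite QLSR_eq => hpos.
  case: (posnP (c r)) => hc.
    have hLr : 0 < L r.
      move: hpos; rewrite hc; case: (posnP (absz (L r))) => h0.
        by rewrite (HLZ r) h0 /S big_geq.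
      by rewrite (HLZ r) ltz_nat.
    have [r2 e2] := Hdn r hLr.
    have [r' [e' c']] := c_last r2.
    have hk : absz (L r) = (absz (L r2)).+1.
      apply/eqP; rewrite -eqz_nat -HLZ -addn1 PoszD -HLZ e2; apply/eqP; lia.
    exists r'; rewrite !QLSR_eq e' c' hk S_S hc e2; lia.
  have [r' [e' c']] := c_prev hc.
  exists r'; rewrite QLSR_eq e' c'.
  have -> : ((c r).-1)%:Z = (c r)%:Z - 1 by rewrite -subn1 PoszD ?subzn //; lia.
  lia.
apply: dense_ranking => //; split.
- by move=> r; rewrite ge0 /=; apply: dense_bound.
- move=> r r'; rewrite !subrow_rcons => /rcons_inj [e1 e2].
  have eL := HLe _ _ e1.
  by rewrite !QLSR_eq eL (c_eq eL e2).
- move=> r r'; rewrite !subrow_rcons lexlt_rcons; last by rewrite !size_subrow.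
  case/orP => [/HLl h|/andP [/eqP e1 hlt]].
    rewrite !QLSR_eq.
    have hl : (absz (L r) < absz (L r'))%N by rewrite -ltz_nat -!HLZ.
    have h1 := S_mono hl.
    have h2 := c_le r.
    rewrite S_S in h1.
    have h3 : (c r)%:Z <= (cnt (absz (L r)) m)%:Z by rewrite lez_nat.
    have := S_ge0 (absz (L r)); lia.
  have eL := HLe _ _ e1.
  rewrite !QLSR_eq eL.
  have := c_lt eL hlt; rewrite -ltz_nat; lia.
Qed.

End PartB.

Unset Implicit Arguments. Set Strict Implicit.

Theorem mainTheorem2 (R : realType) (m n : nat) (D : 'M[R]_(m, n)) (Q : 'M[int]_(m, n))
    (a : seq 'I_n) (L : 'I_m -> int) (i : 'I_n) :
  sorting_matrix D Q ->
  is_ranking_vector D a L ->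
  is_ranking_vector D (rcons a i) (QuickLexSortRefine D Q i L).
Proof.
move=> HQ HL.
have Hdn := ranking_dense HL.
have [[HLr HLe HLl] _] := HL.
apply: main_section => //.
Qed.
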